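(* Let $\mathbb{X}$ be a topological space with viable base $\Omega_0$, $\mathbb{D}$ a bc-domain with basis $D_0$, and let $f=\bigsqcup_{i\in I}b_i\chi_{\mathcal{O}_{{\downarrow}W_i}}$ and $g=\bigsqcup_{j\in J}b'_j\chi_{\mathcal{O}_{{\downarrow}W'_j}}$ be elements of $\widehat{\mathbb{B}}$ (finite consistent families with $W_i,W'_j\in\Omega_0$, $b_i,b'_j\in D_0$). Then for each $i\in I$ there is $U_i\in\Omega_0$ with $\mathcal{O}_{{\downarrow}U_i}=g^{-1}(\twoheaduparrow b_i)$, and $f\ll g$ in $[\widehat{\mathbb{X}}_{\Omega_0}\to\mathbb{D}]$ if and only if $W_i\subseteq U_i$ for all $i\in I$.
   Context: A viable base of $\mathbb{X}=(X,\tau_{\mathbb{X}})$ is a family $\Omega_0\subseteq\tau_{\mathbb{X}}$ closed under finite unions and finite intersections (so $\emptyset,X\in\Omega_0$) which is a base of $\tau_{\mathbb{X}}$. ${\downarrow}W=\{U\in\Omega_0:U\subseteq W\}$. $\mathrm{Idl}(\Omega_0)$ is the set of ideals (nonempty, downward closed, directed subsets) of $(\Omega_0,\subseteq)$, ordered by inclusion; a complete lattice. A completely prime filter of a complete lattice $L$ is a nonempty upward closed $F\subseteq L$ closed under binary meets with $\bigvee A\in F\Rightarrow A\cap F\neq\emptyset$. $\widehat{\mathbb{X}}_{\Omega_0}$ is the set of completely prime filters of $\mathrm{Idl}(\Omega_0)$ with topology whose open sets are exactly $\mathcal{O}_I=\{y: I\in y\}$. A bc-domain is a continuous dcpo with least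 element $\bot$ in which bounded subsets have joins; $x\ll y$ is the way-below relation; $\twoheaduparrow b=\{d: b\ll d\}$. $[\widehat{\mathbb{X}}_{\Omega_0}\to\mathbb{D}]$ is the set of functions continuous into the Scott topology of $D$, ordered pointwise. $b\chi_O$ has value $b$ on $O$ and $\bot$ elsewhere; a family $\{b_i\chi_{O_i}\}$ is consistent if every subfamily with nonempty common intersection of the $O_i$ has bounded values $b_i$; $\widehat{\mathbb{B}}$ is the set of pointwise joins of finite consistent families $\{b_i\chi_{\mathcal{O}_{{\downarrow}W_i}}\}$ with $W_i\in\Omega_0$, $b_i\in D_0$. *)

(* Defs.v *)
From HB Require Import structures.
From mathcomp Require Import all_boot all_order.
From mathcomp Require Import boolp classical_sets topology.

Set Implicit Arguments.
Unset Strict Implicit.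
Unset Printing Implicit Defensive.

Local Open Scope classical_set_scope.

Section Order.
Variables (T : Type) (P : T -> Prop) (le : T -> T -> Prop).

Definition is_ub (S : T -> Prop) (u : T) : Prop :=
  forall x, S x -> le x u.

Definition is_sup (S : T -> Prop) (s : T) : Prop :=
  P s /\ is_ub S s /\ (forall u, P u -> is_ub S u -> le s u).

Definition is_inf2 (a b m : T) : Prop :=
  P m /\ le m a /\ le m b /\ (forall u, P u -> le u a -> le u b -> le u m).

Definition directed_in (S : T -> Prop) : Prop :=
  (exists x, S x) /\ (forall x, S x -> P x) /\
  (forall x y, S x -> S y -> exists z, S z /\ le x z /\ le y z).

Definition way_below (x y : T) : Prop :=
  forall S s, directed_in S -> is_sup S s -> le y s -> exists d, S d /\ le x d.

End Order.

Section Domain.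
Variables (D : Type) (le : D -> D -> Prop).

Definition all_D : D -> Prop := fun _ => True.

Definition is_partial_order : Prop :=
  (forall x, le x x) /\
  (forall x y z, le x y -> le y z -> le x z) /\
  (forall x y, le x y -> le y x -> x = y).

Definition is_bc_domain (bot : D) : Prop :=
  is_partial_order /\
  (forall S, directed_in all_D le S -> exists s, is_sup all_D le S s) /\
  (forall x, directed_in all_D le (fun d => way_below all_D le d x) /\
             is_sup all_D le (fun d => way_below all_D le d x) x) /\
  (forall x, le bot x) /\
  (forall S, (exists u, is_ub le S u) -> exists s, is_sup all_D le S s).

Definition is_basis (D0 : D -> Prop) : Prop :=
  forall x, directed_in all_D le (fun b => D0 b /\ way_below all_D le b x) /\
            is_sup all_D le (fun b => D0 b /\ way_below all_D le b x) x.

Definition scott_open (V : D -> Prop) : Prop :=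
  (forall d e, V d -> le d e -> V e) /\
  (forall S s, directed_in all_D le S -> is_sup all_D le S s -> V s ->
     exists d, S d /\ V d).

Definition wb_up (b : D) : D -> Prop := fun d => way_below all_D le b d.

End Domain.

Section Spaces.
Variables (X : topologicalType) (Omega0 : set (set X)).

Definition viable_base : Prop :=
  Omega0 `<=` open /\
  (forall U V, Omega0 U -> Omega0 V -> Omega0 (U `|` V)) /\
  (forall U V, Omega0 U -> Omega0 V -> Omega0 (U `&` V)) /\
  Omega0 set0 /\ Omega0 setT /\
  (forall A : set X, open A ->
     A = \bigcup_(U in [set U | Omega0 U /\ U `<=` A]) U).

Definition is_ideal (I : set (set X)) : Prop :=
  I `<=` Omega0 /\
  (exists U, I U) /\
  (forall U V, Omega0 U -> U `<=` V -> I V -> I U) /\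
  (forall U V, I U -> I V -> exists W, I W /\ U `<=` W /\ V `<=` W).

Definition ideal_le (I J : set (set X)) : Prop := I `<=` J.

Definition downW (W : set X) : set (set X) := [set U | Omega0 U /\ U `<=` W].

(* completely prime filters of the complete lattice Idl(Omega0) *)
Definition is_cpf (y : set (set (set X))) : Prop :=
  y `<=` is_ideal /\
  (exists I, y I) /\
  (forall I J, y I -> is_ideal J -> ideal_le I J -> y J) /\
  (forall I J M, y I -> y J -> is_inf2 is_ideal ideal_le I J M -> y M) /\
  (forall (A : set (set (set X))) J, A `<=` is_ideal ->
     is_sup is_ideal ideal_le A J -> y J -> exists I, A I /\ y I).

Definition Xhat := {y : set (set (set X)) | is_cpf y}.

Definition O_ (I : set (set X)) : Xhat -> Prop := fun y => proj1_sig y I.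

(* continuity of h : \hat X -> D into the Scott topology of D;
   the opens of \hat X are exactly the O_I, I an ideal *)
Definition scott_continuous (D : Type) (le : D -> D -> Prop)
  (h : Xhat -> D) : Prop :=
  forall V, scott_open le V ->
    exists I, is_ideal I /\ (forall y, V (h y) <-> O_ I y).

Definition fun_le (D : Type) (le : D -> D -> Prop) (h k : Xhat -> D) : Prop :=
  forall y, le (h y) (k y).

(* value of the step function b chi_{O_{downW W}} at y, as a set of candidate
   values: {b} if y in O_{downW W}, {bot} otherwise *)
Definition step_val (D : Type) (bot b : D) (W : set X) (y : Xhat) : D -> Prop :=
  fun d => (O_ (downW W) y /\ d = b) \/ (~ O_ (downW W) y /\ d = bot).

Definition consistent_family (D : Type) (le : D -> D -> Prop) (I : finType)
  (W : I -> set X) (b : I -> D) : Prop :=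
  forall J : {set I},
    (exists y : Xhat, forall i, i \in J -> O_ (downW (W i)) y) ->
    exists u, forall i, i \in J -> le (b i) u.

Definition is_step_join (D : Type) (le : D -> D -> Prop) (bot : D)
  (I : finType) (W : I -> set X) (b : I -> D) (f : Xhat -> D) : Prop :=
  forall y, is_sup (all_D (D:=D)) le
              (fun d => exists i, step_val bot (b i) (W i) y d) (f y).

End Spaces.

(* Main.v *)
Require Import Defs.
From HB Require Import structures.
From mathcomp Require Import all_boot all_order.
From mathcomp Require Import boolp classical_sets topology.

Set Implicit Arguments.
Unset Strict Implicit.
Unset Printing Implicit Defensive.
Local Open Scope classical_set_scope.

Section Cpf.
Variables (X : topologicalType) (Om : set (set X)).
Hypothesis hV : viable_base Om.

Lemma OmU U V : Om U -> Om V -> Om (U `|` V).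
Proof. by case: hV => _ [H _]; apply: H. Qed.
Lemma OmI U V : Om U -> Om V -> Om (U `&` V).
Proof. by case: hV => _ [_ [H _]]; apply: H. Qed.
Lemma Om0 : Om set0. Proof. by case: hV => _ [_ [_ [H _]]]. Qed.
Lemma OmT : Om setT. Proof. by case: hV => _ [_ [_ [_ [H _]]]]. Qed.

Lemma ideal_downW A : Om A -> is_ideal Om (downW Om A).
Proof.
move=> hA; split; first by move=> U [].
split; first by exists A; split.
split; first by move=> U V hU UV [_ VA]; split=> //; apply: subset_trans UV VA.
move=> U V [hU UA] [hV' VA]; exists (U `|` V); split; first split.
- exact: OmU.
- by move=> x [] ?; [apply UA| apply VA].
by split=> x ?; [left|right].
Qed.

Lemma ideal_empty I : is_ideal Om I -> I set0.
Proof. case=> _ [[U IU] [dc _]]; apply: (dc set0 U) => //; exact: Om0. Qed.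

Lemma ideal_union I U V : is_ideal Om I -> I U -> I V -> I (U `|` V).
Proof.
case=> sub [_ [dc dir]] IU IV; have [Z [IZ [UZ VZ]]] := dir _ _ IU IV.
apply: (dc _ Z) => //; first exact: OmU (sub _ IU) (sub _ IV).
by move=> x [] ?; [apply UZ|apply VZ].
Qed.

Lemma downW_le I A : is_ideal Om I -> I A -> ideal_le (downW Om A) I.
Proof. case=> sub [_ [dc _]] IA U [hU UA]; exact: dc UA IA. Qed.

Section Raw.
Variable y : set (set (set X)).
Hypothesis hy : is_cpf Om y.

Lemma rcpf_ideal_up I K : y I -> is_ideal Om K -> ideal_le I K -> y K.
Proof. by case: hy => _ [_ [up _]]; apply: up. Qed.

Lemma rcpf_mem I A : y (downW Om A) -> is_ideal Om I -> I A -> y I.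
Proof. move=> yA iI IA; apply: rcpf_ideal_up yA iI (downW_le iI IA). Qed.

Lemma rcpf_up A B : y (downW Om A) -> Om B -> A `<=` B -> y (downW Om B).
Proof.
move=> yA hB AB; apply: rcpf_ideal_up yA (ideal_downW hB) _ => U [hU UA].
by split=> //; apply: subset_trans UA AB.
Qed.

Lemma rcpf_meet A B : Om A -> Om B -> y (downW Om A) -> y (downW Om B) ->
  y (downW Om (A `&` B)).
Proof.
move=> hA hB; case: hy => _ [_ [_ [meet _]]] yA yB.
apply: meet yA yB _; split; first exact: ideal_downW (OmI hA hB).
split; first by move=> U [hU UAB]; split=> // x /UAB [].
split; first by move=> U [hU UAB]; split=> // x /UAB [].
move=> u _ uA uB U uU; have [hU UA] := uA _ uU; have [_ UB] := uB _ uU.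
by split=> // x Ux; split; [apply: UA|apply: UB].
Qed.

Lemma rcpf_join A B : Om A -> Om B -> y (downW Om (A `|` B)) ->
  y (downW Om A) \/ y (downW Om B).
Proof.
move=> hA hB; case: hy => _ [_ [_ [_ cp]]] yAB.
have h1 : (fun K => K = downW Om A \/ K = downW Om B) `<=` is_ideal Om.
  by move=> K [->|->]; apply: ideal_downW.
have h2 : is_sup (is_ideal Om) (@ideal_le X)
   (fun K => K = downW Om A \/ K = downW Om B) (downW Om (A `|` B)).
  split; first exact: ideal_downW (OmU hA hB).
  split; first by move=> K [->|->] U [hU UA]; split=> //; move=> x /UA; [left|right].
  move=> u iu ub U [hU UAB].
  have uA := ub _ (or_introl erefl) A (conj hA (@subset_refl _ A)).
  have uB := ub _ (or_intror erefl) B (conj hB (@subset_refl _ B)).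
  have h := ideal_union iu uA uB.
  by case: iu => _ [_ [dc _]]; exact: dc UAB h.
have [K [[->|->] yK]] := cp _ _ h1 h2 yAB; [by left| by right].
Qed.

Lemma rcpf_empty : ~ y (downW Om set0).
Proof.
case: hy => _ [_ [_ [_ cp]]] y0.
have h1 : (fun _ : set (set X) => False) `<=` is_ideal Om by [].
have h2 : is_sup (is_ideal Om) (@ideal_le X) (fun _ => False) (downW Om set0).
  split; first exact: ideal_downW Om0.
  split=> // u iu _ U [hU U0].
  have -> : U = set0 by apply/seteqP; split=> // x /U0.
  exact: ideal_empty iu.
by have [K [[] _]] := cp _ _ h1 h2 y0.
Qed.

Lemma rcpf_top : y (downW Om setT).
Proof.
case: hy => sub [[K0 yK0] [up _]]; apply: (up K0) => //; first exact: ideal_downW OmT.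
move=> U KU; case: (sub _ yK0) => KOm _; by split=> //; apply: KOm.
Qed.

Lemma rcpf_idealE I : is_ideal Om I -> (y I <-> exists Z, I Z /\ y (downW Om Z)).
Proof.
move=> iI; split; last by move=> [Z [IZ yZ]]; exact: rcpf_mem yZ iI IZ.
case: hy => _ [_ [_ [_ cp]]] yI.
have h1 : (fun K => exists Z, I Z /\ K = downW Om Z) `<=` is_ideal Om.
  move=> K [Z [IZ ->]]; apply: ideal_downW; by case: iI => s _; apply: s.
have h2 : is_sup (is_ideal Om) (@ideal_le X)
   (fun K => exists Z, I Z /\ K = downW Om Z) I.
  split=> //; split; first by move=> K [Z [IZ ->]]; exact: downW_le.
  move=> u iu ub Z IZ; apply: (ub _ (ex_intro _ Z (conj IZ erefl))).
  by split; [case: iI => s _; apply: s|].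
have [K [[Z [IZ ->]] yK]] := cp _ _ h1 h2 yI; by exists Z.
Qed.

End Raw.

Definition Xh := Xhat Om.

Lemma cpf_up (y : Xh) A B : O_ (downW Om A) y -> Om B -> A `<=` B -> O_ (downW Om B) y.
Proof. exact: (@rcpf_up (sval y) (proj2_sig y) A B). Qed.
Lemma cpf_ideal_up (y : Xh) I K : O_ I y -> is_ideal Om K -> ideal_le I K -> O_ K y.
Proof. exact: (@rcpf_ideal_up (sval y) (proj2_sig y) I K). Qed.
Lemma cpf_mem (y : Xh) I A : O_ (downW Om A) y -> is_ideal Om I -> I A -> O_ I y.
Proof. exact: (@rcpf_mem (sval y) (proj2_sig y) I A). Qed.
Lemma cpf_meet (y : Xh) A B : Om A -> Om B -> O_ (downW Om A) y -> O_ (downW Om B) y ->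
  O_ (downW Om (A `&` B)) y.
Proof. exact: (@rcpf_meet (sval y) (proj2_sig y) A B). Qed.
Lemma cpf_join (y : Xh) A B : Om A -> Om B -> O_ (downW Om (A `|` B)) y ->
  O_ (downW Om A) y \/ O_ (downW Om B) y.
Proof. exact: (@rcpf_join (sval y) (proj2_sig y) A B). Qed.
Lemma cpf_top (y : Xh) : O_ (downW Om setT) y.
Proof. exact: (@rcpf_top (sval y) (proj2_sig y)). Qed.
Lemma cpf_idealE (y : Xh) I : is_ideal Om I ->
  (O_ I y <-> exists Z, I Z /\ O_ (downW Om Z) y).
Proof. exact: (@rcpf_idealE (sval y) (proj2_sig y) I). Qed.

Lemma cpf_empty (y : Xh) : ~ O_ (downW Om set0) y.
Proof. exact: rcpf_empty (proj2_sig y). Qed.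

Lemma rep (P : Xh -> Prop) :
  (forall y, P y -> exists Z, Om Z /\ O_ (downW Om Z) y /\
      forall y', O_ (downW Om Z) y' -> P y') ->
  exists I, is_ideal Om I /\ forall y, P y <-> O_ I y.
Proof.
move=> HP; pose I := fun Z => Om Z /\ forall y, O_ (downW Om Z) y -> P y.
have iI : is_ideal Om I.
  split; first by move=> Z [].
  split; first by exists set0; split; [exact: Om0| move=> y /cpf_empty].
  split.
    move=> U V hU UV [hV' HV]; split=> // y yU; apply: HV.
    exact: cpf_up yU hV' UV.
  move=> U V [hU HU] [hV' HV]; exists (U `|` V); split; last by split=> x ?; [left|right].
  split; first exact: OmU.
  move=> y yUV; case: (cpf_join hU hV' yUV) => ?; [exact: HU|exact: HV].
exists I; split=> // y; split.
- move=> Py; have [Z [hZ [yZ HZ]]] := HP y Py.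
  apply/(@cpf_idealE y I iI); exists Z; split => //.
- by move=> /(@cpf_idealE y I iI) [Z [[_ HZ] yZ]]; exact: HZ.
Qed.

Lemma bigI_cpf (T : eqType) (r : seq T) (p : pred T) (F : T -> set X) :
  (forall k, Om (F k)) ->
  Om (\big[setI/setT]_(k <- r | p k) F k) /\
  forall y : Xh, O_ (downW Om (\big[setI/setT]_(k <- r | p k) F k)) y <->
    (forall k, k \in r -> p k -> O_ (downW Om (F k)) y).
Proof.
move=> hF; elim: r => [|x r [hOm IH]].
  rewrite big_nil; split; first exact: OmT.
  by move=> y; split=> // _; exact: cpf_top.
rewrite big_cons; case: (boolP (p x)) => px.
  split; first exact: OmI.
  move=> y; split.
    move=> yI k; rewrite inE => /orP [/eqP -> _|kr pk].
      by apply: cpf_up yI (hF x) _ => z [].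
    have : O_ (downW Om (\big[setI/setT]_(k <- r | p k) F k)) y.
      by apply: cpf_up yI hOm _ => z [].
    by move/IH; apply.
  move=> H; apply: cpf_meet (hF x) hOm _ _.
    by apply: H => //; rewrite inE eqxx.
  by apply/IH => k kr pk; apply: H => //; rewrite inE kr orbT.
split=> // y; split.
  move=> /IH H k; rewrite inE => /orP [/eqP ->|kr pk]; first by rewrite (negbTE px).
  exact: H.
by move=> H; apply/IH => k kr pk; apply: H => //; rewrite inE kr orbT.
Qed.

Lemma bigU_cpf (T : eqType) (r : seq T) (p : pred T) (F : T -> set X) :
  (forall k, Om (F k)) ->
  Om (\big[setU/set0]_(k <- r | p k) F k) /\
  forall y : Xh, O_ (downW Om (\big[setU/set0]_(k <- r | p k) F k)) y <->
    (exists k, k \in r /\ p k /\ O_ (downW Om (F k)) y).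
Proof.
move=> hF; elim: r => [|x r [hOm IH]].
  rewrite big_nil; split; first exact: Om0.
  by move=> y; split=> [/cpf_empty //|[k []]].
rewrite big_cons; case: (boolP (p x)) => px.
  split; first exact: OmU.
  move=> y; split.
    move=> /(cpf_join (hF x) hOm) [yx|/IH [k [kr [pk yk]]]].
      by exists x; rewrite inE eqxx.
    by exists k; rewrite inE kr orbT.
  move=> [k []]; rewrite inE => /orP [/eqP ->|kr] [pk yk].
    by apply: cpf_up yk (OmU (hF x) hOm) _ => z ?; left.
  have yr : O_ (downW Om (\big[setU/set0]_(k <- r | p k) F k)) y.
    by apply/IH; exists k.
  by apply: cpf_up yr (OmU (hF x) hOm) _ => z ?; right.
split=> // y; split.
  by move=> /IH [k [kr H]]; exists k; rewrite inE kr orbT.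
move=> [k []]; rewrite inE => /orP [/eqP ->|kr] [pk yk]; first by rewrite pk in px.
by apply/IH; exists k.
Qed.

Definition Qid (Iid : set (set X)) (A : set X) (K : set (set X)) : Prop :=
  [/\ K `<=` Om, (forall U V, Om U -> U `<=` V -> K V -> K U),
      (forall U V, K U -> K V -> K (U `|` V)), Iid `<=` K & ~ K A].

Lemma sep (Iid : set (set X)) A : is_ideal Om Iid -> Om A -> ~ Iid A ->
  exists y : Xh, O_ (downW Om A) y /\ ~ O_ Iid y.
Proof.
move=> iI hA nIA.
have [IOm [_ [dcI _]]] := iI.
pose P0 K := Qid Iid A (Iid `|` K).
have chain : forall F, F `<=` P0 -> total_on F subset -> P0 (\bigcup_(Y in F) Y).
  move=> F FP tot; split.
  - move=> Z [IZ|[K FK KZ]]; first exact: IOm.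
    by case: (FP _ FK) => sub _ _ _ _; apply: sub; right.
  - move=> U V hU UV [IV|[K FK KV]]; first by left; exact: dcI UV IV.
    case: (FP _ FK) => _ dc _ _ _.
    by case: (dc U V hU UV (or_intror KV)) => [IU|KU]; [left|right; exists K].
  - move=> U V [IU|[K1 FK1 K1U]] [IV|[K2 FK2 K2V]].
    + by left; exact: ideal_union iI IU IV.
    + case: (FP _ FK2) => _ _ un _ _.
      by case: (un U V (or_introl IU) (or_intror K2V)) => ?; [left|right; exists K2].
    + case: (FP _ FK1) => _ _ un _ _.
      by case: (un U V (or_intror K1U) (or_introl IV)) => ?; [left|right; exists K1].
    + case: (tot _ _ FK1 FK2) => sub12.
        case: (FP _ FK2) => _ _ un _ _.
        by case: (un U V (or_intror (sub12 _ K1U)) (or_intror K2V)) => ?; [left|right; exists K2].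
      case: (FP _ FK1) => _ _ un _ _.
      by case: (un U V (or_intror K1U) (or_intror (sub12 _ K2V))) => ?; [left|right; exists K1].
  - by move=> Z IZ; left.
  - move=> [IA|[K FK KA]]; first by [].
    by case: (FP _ FK) => _ _ _ _; apply; right.
have [M0 [QM maxM]] := Zorn_bigcup chain.
pose M := Iid `|` M0.
have [MOm dcM unM IM nMA] : Qid Iid A M := QM.
have Mset0 : M set0 by left; exact: ideal_empty iI.
have iM : is_ideal Om M.
  split=> //; split; first by exists set0.
  split=> //; move=> U V MU MV; exists (U `|` V); split; first exact: unM.
  by split=> x ?; [left|right].
have ext : forall U, Om U -> ~ M U -> exists k, M k /\ A `<=` k `|` U.
  move=> U hU nMU; case: (pselect (exists k, M k /\ A `<=` k `|` U)) => // nex.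
  exfalso.
  pose B := fun Z => Om Z /\ exists k, M k /\ Z `<=` k `|` U.
  have IB : Iid `<=` B.
    move=> Z IZ; split; first exact: IOm.
    by exists Z; split; [left|move=> x ?; left].
  have QB : Qid Iid A (Iid `|` B).
    have -> : Iid `|` B = B.
      by apply/seteqP; split=> [Z [/IB|]|Z ?] //; right.
    split.
    - by move=> Z [].
    - move=> U' V' hU' UV [_ [k [Mk Vk]]]; split=> //; exists k; split=> //.
      exact: subset_trans UV Vk.
    - move=> Z1 Z2 [h1 [k1 [Mk1 Z1k]]] [h2 [k2 [Mk2 Z2k]]]; split; first exact: OmU.
      exists (k1 `|` k2); split; first exact: unM.
      move=> x [/Z1k|/Z2k] [] ?; by [left; left|right|left; right|right].
    - exact: IB.
    - by move=> [_ Hk]; apply: nex.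
  apply: (maxM B) QB; split.
    move=> Z M0Z; have MZ : M Z by right.
    by split; [exact: MOm|exists Z; split => // x ?; left].
  move=> BM0; apply: nMU; right; apply: BM0; split=> //.
  by exists set0; split=> // x ?; right.
have prime : forall U V, Om U -> Om V -> M (U `&` V) -> M U \/ M V.
  move=> U V hU hV2 MUV.
  case: (pselect (M U)) => [?|nU]; first by left.
  case: (pselect (M V)) => [?|nV]; first by right.
  exfalso.
  have [k1 [Mk1 A1]] := ext U hU nU; have [k2 [Mk2 A2]] := ext V hV2 nV.
  apply: nMA; apply: (dcM A ((k1 `|` k2) `|` (U `&` V))) => //.
  - move=> x Ax; case: (A1 _ Ax) => [k1x|Ux]; first by left; left.
    case: (A2 _ Ax) => [k2x|Vx]; first by left; right.
    by right.
  - by apply: (unM) => //; exact: (unM).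
pose y := fun K => is_ideal Om K /\ exists Z, K Z /\ ~ M Z.
have cpf : is_cpf Om y.
  split; first by move=> K [].
  split; first by exists (downW Om A); split; [exact: ideal_downW | exists A; split; [split|]].
  split; first by move=> K K' [iK [Z [KZ nMZ]]] iK' KK'; split=> //; exists Z; split=> //; apply: KK'.
  split.
    move=> K1 K2 Mi [iK1 [Z1 [K1Z1 nM1]]] [iK2 [Z2 [K2Z2 nM2]]] [iMi [_ [_ glb]]].
    have [K1Om [_ [dc1 _]]] := iK1; have [K2Om [_ [dc2 _]]] := iK2.
    have hZ1 := K1Om _ K1Z1; have hZ2 := K2Om _ K2Z2.
    split=> //; exists (Z1 `&` Z2); split; last by case/(prime _ _ hZ1 hZ2).
    have iK12 : is_ideal Om (fun Z => K1 Z /\ K2 Z).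
      split; first by move=> Z [/K1Om].
      split; first by exists set0; split; apply: ideal_empty.
      split; first by move=> U V hU UV [? ?]; split; [exact: dc1 UV _|exact: dc2 UV _].
      move=> U V [? ?] [? ?]; exists (U `|` V).
      by split; [split; apply: ideal_union|split=> x ?; [left|right]].
    apply: (glb _ iK12); [by move=> Z []|by move=> Z []|].
    split; [apply: (dc1 _ Z1)|apply: (dc2 _ Z2)] => //; try exact: OmI;
      by move=> x [].
  move=> Fam Jsup Fsub [iJ [_ least]] [_ [Z [JZ nMZ]]].
  case: (pselect (exists I, Fam I /\ y I)) => // nex; exfalso.
  apply: nMZ; apply: (least M iM) JZ => K FK Z' KZ'.
  case: (pselect (M Z')) => // nMZ'; exfalso; apply: nex.
  by exists K; split=> //; split; [exact: Fsub|exists Z'].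
exists (exist _ y cpf); rewrite /O_ /=; split.
  by split; [exact: ideal_downW|exists A; split; [split|]].
by move=> [_ [Z [IZ nMZ]]]; apply: nMZ; apply: IM.
Qed.

End Cpf.

Fixpoint inP (T : Type) (x : T) (s : seq T) : Prop :=
  if s is c :: s' then c = x \/ inP x s' else False.

Lemma inP_cat (T : Type) (x : T) (s1 s2 : seq T) :
  inP x s1 \/ inP x s2 -> inP x (s1 ++ s2).
Proof.
elim: s1 => [|c s1 IH] /= H; first by case: H => [[]|].
case: H => [[->|h]|h]; [by left| by right; apply: IH; left | by right; apply: IH; right].
Qed.

Section Dom.
Variables (D : Type) (le : D -> D -> Prop) (bot : D).
Hypothesis hD : is_bc_domain le bot.

Local Notation wb := (way_below (@all_D D) le).

Lemma le_refl x : le x x. Proof. by case: hD => [[r _] _]. Qed.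
Lemma le_trans x y z : le x y -> le y z -> le x z.
Proof. by case: hD => [[_ [t _]] _]; apply: t. Qed.
Lemma le_bot x : le bot x. Proof. by case: hD => _ [_ [_ [H _]]]. Qed.
Lemma dcpo S : directed_in (@all_D D) le S -> exists s, is_sup (@all_D D) le S s.
Proof. by case: hD => _ [H _]; apply: H. Qed.
Lemma bjoin S : (exists u, is_ub le S u) -> exists s, is_sup (@all_D D) le S s.
Proof. by case: hD => _ [_ [_ [_ H]]]; apply: H. Qed.
Lemma contD x : directed_in (@all_D D) le (fun d => wb d x) /\
  is_sup (@all_D D) le (fun d => wb d x) x.
Proof. by case: hD => _ [_ [H _]]; apply: H. Qed.

Lemma wb_le x y : wb x y -> le x y.
Proof.
move=> xy.
have h1 : directed_in (@all_D D) le (fun d => d = y).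
  split; first by exists y.
  by split=> // a b -> ->; exists y; split=> //; split; apply: le_refl.
have h2 : is_sup (@all_D D) le (fun d => d = y) y.
  split=> //; split; first by move=> a ->; apply: le_refl.
  by move=> u _; apply.
by have [d [-> //]] := xy _ _ h1 h2 (le_refl y).
Qed.

Lemma wb_le_r x y z : wb x y -> le y z -> wb x z.
Proof. move=> xy yz S s dS sS zs; apply: xy dS sS _; exact: le_trans yz zs. Qed.

Lemma le_wb_l x y z : le x y -> wb y z -> wb x z.
Proof.
move=> xy yz S s dS sS zs; have [d [Sd yd]] := yz S s dS sS zs.
by exists d; split=> //; exact: le_trans xy yd.
Qed.

Lemma bot_wb x : wb bot x.
Proof. move=> S s [[d Sd] _] _ _; exists d; split=> //; exact: le_bot. Qed.

Lemma interp x z : wb x z -> exists c, wb x c /\ wb c z.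
Proof.
move=> xz; pose T d := exists e, wb d e /\ wb e z.
have [[[e0 he0] [_ dirz]] [_ [ubz lz]]] := contD z.
have dT : directed_in (@all_D D) le T.
  split.
    have [[[d0 hd0] _] _] := contD e0; by exists d0, e0.
  split=> // d1 d2 [e1 [d1e1 e1z]] [e2 [d2e2 e2z]].
  have [e3 [e3z [e13 e23]]] := dirz _ _ e1z e2z.
  have [[_ [_ dir3]] _] := contD e3.
  have [d3 [d3e3 [d13 d23]]] := dir3 _ _ (wb_le_r d1e1 e13) (wb_le_r d2e2 e23).
  by exists d3; split=> //; exists e3.
have sT : is_sup (@all_D D) le T z.
  split=> //; split.
    by move=> d [e [de ez]]; apply: le_trans (wb_le de) (wb_le ez).
  move=> u _ ubu; apply: lz => // e ez.
  have [_ [_ [_ le_e]]] := contD e.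
  by apply: le_e => // d de; apply: ubu; exists e.
have [d [[e [de ez]] xd]] := xz T z dT sT (le_refl z).
by exists e; split=> //; exact: le_wb_l xd de.
Qed.

Lemma wb_open b : scott_open le (fun d => wb b d).
Proof.
split; first by move=> d e bd de; exact: wb_le_r bd de.
move=> S s dS sS bs; have [c [bc cs]] := interp bs.
have [d [Sd cd]] := cs S s dS sS (le_refl s).
by exists d; split=> //; exact: wb_le_r bc cd.
Qed.

End Dom.

Section Step.
Variables (X : topologicalType) (Om : set (set X)).
Hypothesis hV : viable_base Om.
Variables (D : Type) (le : D -> D -> Prop) (bot : D).
Hypothesis hD : is_bc_domain le bot.
Variables (I : finType) (W : I -> set X) (b : I -> D) (f : Xhat Om -> D).
Hypothesis hW : forall i, Om (W i).
Hypothesis hf : is_step_join le bot W b f.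

Lemma sj_ub y i : O_ (downW Om (W i)) y -> le (b i) (f y).
Proof. by move=> yi; have [_ [ub _]] := hf y; apply: ub; exists i; left. Qed.

Lemma sj_least y u : (forall i, O_ (downW Om (W i)) y -> le (b i) u) -> le (f y) u.
Proof.
move=> H; have [_ [_ l]] := hf y; apply: l => // d [i [[yi ->]|[_ ->]]].
  exact: H yi.
exact (le_bot hD u).
Qed.

Lemma sj_mono y y' : (forall i, O_ (downW Om (W i)) y -> O_ (downW Om (W i)) y') ->
  le (f y) (f y').
Proof. move=> H; apply: sj_least => i /H; exact: sj_ub. Qed.

Definition Zof (y : Xhat Om) := \big[setI/setT]_(i | `[< O_ (downW Om (W i)) y >]) W i.

Lemma Zof_spec y : Om (Zof y) /\ O_ (downW Om (Zof y)) y /\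
  forall y' : Xhat Om, O_ (downW Om (Zof y)) y' ->
    forall i, O_ (downW Om (W i)) y -> O_ (downW Om (W i)) y'.
Proof.
have [hO H] := bigI_cpf hV (index_enum I) (fun i => `[< O_ (downW Om (W i)) y >]) hW.
split=> //; split.
  by apply/H => i _ /asboolP.
move=> y' /(H y') H' i yi; apply: H'; [exact: mem_index_enum | exact/asboolP].
Qed.

Lemma sj_cont : scott_continuous le f.
Proof.
move=> V [up _]; apply: (@rep _ _ hV (fun y => V (f y))) => y Vy; have [hZ [yZ HZ]] := Zof_spec y.
exists (Zof y); split=> //; split=> // y' y'Z; apply: up Vy _; apply: sj_mono.
exact: HZ.
Qed.

End Step.

Section Main.
Variables (X : topologicalType) (Om : set (set X)).
Hypothesis hV : viable_base Om.
Variables (D : Type) (le : D -> D -> Prop) (bot : D).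
Hypothesis hD : is_bc_domain le bot.
Variables (J : finType) (W' : J -> set X) (b' : J -> D) (g : Xhat Om -> D).
Hypothesis hW' : forall j, Om (W' j).
Hypothesis hg : is_step_join le bot W' b' g.
Variables (I : finType) (W : I -> set X) (b : I -> D) (f : Xhat Om -> D).
Hypothesis hW : forall i, Om (W i).
Hypothesis hf : is_step_join le bot W b f.

Local Notation wb := (way_below (@all_D D) le).

Definition Qc c (K : {set J}) := forall y : Xhat Om,
  (forall j, j \in K -> O_ (downW Om (W' j)) y) -> wb c (g y).
Definition Uc c := \big[setU/set0]_(K : {set J} | `[< Qc c K >])
  \big[setI/setT]_(j in K) W' j.

Lemma Uc_spec c : Om (Uc c) /\ forall y, O_ (downW Om (Uc c)) y <-> wb c (g y).
Proof.
have hK : forall K : {set J}, Om (\big[setI/setT]_(j in K) W' j).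
  by move=> K; case: (bigI_cpf hV (index_enum J) (fun j => j \in K) hW').
have [hO H] := bigU_cpf hV (index_enum {set J}) (fun K => `[< Qc c K >]) hK.
split=> // y; split.
- move=> /H [K [_ [/asboolP QK yK]]]; apply: QK => j jK.
  have [_ HK] := bigI_cpf hV (index_enum J) (fun j => j \in K) hW'.
  by move/HK: yK; apply=> //; exact: mem_index_enum.
- move=> wbc; apply/H; exists (finset (fun j => `[< O_ (downW Om (W' j)) y >])).
  split; first exact: mem_index_enum.
  split.
    apply/asboolP => y' Hy'; apply: (wb_le_r hD wbc); apply: (sj_mono hD hg).
    by move=> j yj; apply: Hy'; rewrite inE; apply/asboolP.
  have [_ HK] := bigI_cpf hV (index_enum J)
     (fun j => j \in (finset (fun j => `[< O_ (downW Om (W' j)) y >]))) hW'.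
  by apply/HK => j _; rewrite inE => /asboolP.
Qed.

Lemma dir1 : way_below (scott_continuous le) (fun_le le) f g ->
  forall i, W i `<=` Uc (b i).
Proof.
move=> fg i.
suff key : forall y, O_ (downW Om (W i)) y -> wb (b i) (g y).
  case: (pselect (W i `<=` Uc (b i))) => // nsub; exfalso.
  have [hU HU] := Uc_spec (b i).
  have [y [yW nyU]] := sep hV (ideal_downW hV hU) (hW i) (fun h => nsub (proj2 h)).
  by apply: nyU; apply/HU; apply: key.
pose TF (F : seq D) (y : Xhat Om) d := d = bot \/ (inP d F /\ wb d (g y)).
have ex : forall p : seq D * Xhat Om, exists d, is_sup (@all_D D) le (TF p.1 p.2) d.
  move=> [F y]; apply: (bjoin hD); exists (g y) => d [->|[_ dg]].
    exact (le_bot hD (g y)).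
  exact: (wb_le hD dg).
have [hs hsP] := choice ex.
pose h F y := hs (F, y).
have hP F y : is_sup (@all_D D) le (TF F y) (h F y) := hsP (F, y).
have hmono F F' y y' : (forall d, TF F y d -> TF F' y' d) -> le (h F y) (h F' y').
  move=> sub; have [_ [_ l]] := hP F y; apply: l => // d /sub.
  by have [_ [ub _]] := hP F' y'; apply: ub.
have hcont F : scott_continuous le (h F).
  move=> V [up _]; apply: (@rep _ _ hV (fun y => V (h F y))) => y Vy.
  have [hZ [yZ HZ]] := Zof_spec hV hW' y.
  exists (Zof W' y); split=> //; split=> // y' y'Z; apply: up Vy _.
  apply: hmono => d [->|[dF dg]]; first by left.
  right; split=> //; apply: (wb_le_r hD dg); apply: (sj_mono hD hg).
  exact: HZ.
have hwb F y : wb (h F y) (g y).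
  move=> T t dT sT gt.
  have [d [Td Hd]] : exists d, T d /\ forall c, inP c F -> wb c (g y) -> le c d.
    have [[d0 Td0] [_ dirT]] := dT.
    elim: F => [|c F [d1 [Td1 H1]]]; first by exists d0.
    have [d2 [Td2 H2]] : exists d2, T d2 /\ (wb c (g y) -> le c d2).
      case: (pselect (wb c (g y))) => [cg|ncg]; last by exists d0.
      by have [d2 [Td2 cd2]] := cg T t dT sT gt; exists d2.
    have [d3 [Td3 [d13 d23]]] := dirT _ _ Td1 Td2.
    exists d3; split=> // c' [<-|c'F] cg.
      exact: (le_trans hD (H2 cg) d23).
    exact: (le_trans hD (H1 c' c'F cg) d13).
  exists d; split=> //; have [_ [_ l]] := hP F y; apply: l => // c [->|[cF cg]].
    exact (le_bot hD d).
  exact: Hd.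
pose S k := exists F, k = h F.
have dS : directed_in (scott_continuous le) (fun_le le) S.
  split; first by exists (h [::]), [::].
  split; first by move=> k [F ->]; exact: hcont.
  move=> k1 k2 [F1 ->] [F2 ->]; exists (h (F1 ++ F2)); split; first by exists (F1 ++ F2).
  split=> y; apply: hmono => d [->|[dF dg]]; (try by left); right; split=> //.
    by apply: inP_cat; left.
  by apply: inP_cat; right.
have sS : is_sup (scott_continuous le) (fun_le le) S g.
  split; first exact: (sj_cont hV hD hW' hg).
  split.
    move=> k [F ->] y; have [_ [_ l]] := hP F y; apply: l => // d [->|[_ dg]].
      exact (le_bot hD (g y)).
    exact: (wb_le hD dg).
  move=> u _ ubu y; have [_ [_ [_ l]]] := contD hD (g y); apply: l => // c cg.
  apply: (le_trans hD _ (ubu _ (ex_intro _ [:: c] erefl) y)).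
  have [_ [ub _]] := hP [:: c] y; apply: ub; right; split=> //; by left.
have [k [[F ->] fk]] := fg S g dS sS (fun y => le_refl hD (g y)).
move=> y yW; apply: (le_wb_l hD _ (hwb F y)); apply: (le_trans hD _ (fk y)).
exact: (sj_ub hf yW).
Qed.

Lemma dir2 : (forall i, W i `<=` Uc (b i)) ->
  way_below (scott_continuous le) (fun_le le) f g.
Proof.
move=> hsub S s [[h0 Sh0] [Scont Sdir]] [scont [sub sleast]] gs.
have dirY y : directed_in (@all_D D) le (fun d => exists k, S k /\ d = k y).
  split; first by exists (h0 y), h0.
  split=> // d1 d2 [k1 [Sk1 ->]] [k2 [Sk2 ->]].
  have [k3 [Sk3 [k13 k23]]] := Sdir _ _ Sk1 Sk2.
  by exists (k3 y); split; [exists k3|split; [apply: k13|apply: k23]].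
have ex : forall y, exists d, is_sup (@all_D D) le (fun d => exists k, S k /\ d = k y) d.
  move=> y; exact: (dcpo hD (dirY y)).
have [p psup] := choice ex.
have pcont : scott_continuous le p.
  move=> V [up inacc]; apply: (@rep _ _ hV (fun y => V (p y))) => y Vy.
  have [d [[k [Sk ->]] Vk]] := inacc _ _ (dirY y) (psup y) Vy.
  have [I' [iI' HI']] := Scont k Sk V (conj up inacc).
  have [Z [I'Z yZ]] := (cpf_idealE hV y iI').1 ((HI' y).1 Vk).
  exists Z; split; first by case: iI' => s' _; apply: s'.
  split=> // y' y'Z; apply: up ((HI' y').2 (cpf_mem y'Z iI' I'Z)) _.
  by have [_ [ub _]] := psup y'; apply: ub; exists k.
have sp : fun_le le s p.
  apply: sleast => // k Sk y; have [_ [ub _]] := psup y; apply: ub; by exists k.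
have step2 : forall i, exists k, S k /\
    forall y, O_ (downW Om (W i)) y -> le (b i) (k y).
  move=> i.
  pose J0 := fun Z => Om Z /\ exists k, S k /\
     forall y, O_ (downW Om Z) y -> wb (b i) (k y).
  have iJ0 : is_ideal Om J0.
    split; first by move=> Z [].
    split.
      exists set0; split; first exact: (Om0 hV).
      by exists h0; split=> // y /(cpf_empty hV).
    split.
      move=> U V hU UV [hV2 [k [Sk Hk]]]; split=> //; exists k; split=> // y yU.
      exact: (Hk y (cpf_up hV yU hV2 UV)).
    move=> U V [hU [k1 [Sk1 H1]]] [hV2 [k2 [Sk2 H2]]]; exists (U `|` V).
    split; last by split=> x ?; [left|right].
    have [k3 [Sk3 [k13 k23]]] := Sdir _ _ Sk1 Sk2.
    split; first exact: (OmU hV hU hV2).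
    exists k3; split=> // y /(cpf_join hV hU hV2) [yU|yV].
      exact: (wb_le_r hD (H1 y yU) (k13 y)).
    exact: (wb_le_r hD (H2 y yV) (k23 y)).
  case: (pselect (J0 (W i))) => [[_ [k [Sk Hk]]]|nJ].
    by exists k; split=> // y yW; exact: (wb_le hD (Hk y yW)).
  exfalso.
  have [y [yW nyJ]] := sep hV iJ0 (hW i) nJ.
  apply: nyJ.
  have [hU HU] := Uc_spec (b i).
  have yU := cpf_up hV yW hU (hsub i).
  have bp : wb (b i) (p y).
    apply: (wb_le_r hD ((HU y).1 yU)); exact: (le_trans hD (gs y) (sp y)).
  have [d [[k [Sk ->]] bk]] := (wb_open hD (b i)).2 _ _ (dirY y) (psup y) bp.
  have [I' [iI' HI']] := Scont k Sk _ (wb_open hD (b i)).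
  have [Z [I'Z yZ]] := (cpf_idealE hV y iI').1 ((HI' y).1 bk).
  apply: (cpf_mem yZ iJ0); split; first by case: iI' => s' _; apply: s'.
  exists k; split=> // y' y'Z; apply/(HI' y'); exact: (cpf_mem y'Z iI' I'Z).
have comb : forall r : seq I, exists k, S k /\ forall i, i \in r ->
    forall y, O_ (downW Om (W i)) y -> le (b i) (k y).
  elim=> [|i r [k1 [Sk1 H1]]]; first by exists h0.
  have [k2 [Sk2 H2]] := step2 i.
  have [k3 [Sk3 [k13 k23]]] := Sdir _ _ Sk1 Sk2.
  exists k3; split=> // i'; rewrite inE => /orP [/eqP -> | i'r] y yW.
    exact: (le_trans hD (H2 y yW) (k23 y)).
  exact: (le_trans hD (H1 i' i'r y yW) (k13 y)).
have [k [Sk Hk]] := comb (index_enum I).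
exists k; split=> // y; apply: (sj_least hD hf) => i yi.
exact: (Hk i (mem_index_enum i) y yi).
Qed.

End Main.

Theorem mainTheorem17
  (X : topologicalType) (Omega0 : set (set X))
  (D : Type) (le : D -> D -> Prop) (bot : D) (D0 : D -> Prop)
  (I J : finType)
  (W : I -> set X) (b : I -> D) (W' : J -> set X) (b' : J -> D)
  (f g : Xhat Omega0 -> D) :
  viable_base Omega0 ->
  is_bc_domain le bot ->
  is_basis le D0 ->
  (forall i, Omega0 (W i) /\ D0 (b i)) ->
  (forall j, Omega0 (W' j) /\ D0 (b' j)) ->
  consistent_family Omega0 le W b ->
  consistent_family Omega0 le W' b' ->
  is_step_join le bot W b f ->
  is_step_join le bot W' b' g ->
  exists U : I -> set X,
    (forall i, Omega0 (U i) /\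
       (forall y, O_ (downW Omega0 (U i)) y <-> wb_up le (b i) (g y))) /\
    (way_below (scott_continuous le) (fun_le le) f g <->
       (forall i, W i `<=` U i)).
Proof.
move=> hV hD _ hWb hWb' _ _ hf hg.
have hW i := proj1 (hWb i).
have hW' j := proj1 (hWb' j).
exists (fun i => Uc le W' g (b i)).
split; first by move=> i; exact: (Uc_spec hV hD hW' hg (b i)).
split; first exact: (dir1 hV hD hW' hg hW hf).
exact: (dir2 hV hD hW' hg hW hf).
Qed.
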